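(* Let $(N,h)$ be a Kähler manifold of complex dimension $n$ and $x_0\in N$. If $S_k(x_0)>0$, then the curvature is BC-$p$ positive at $x_0$ for every $p\ge k$. If $\mathrm{Ric}_k(x_0)$ is $\ell$-positive for some $\ell\le k$, then the curvature is BC-$p$ positive at $x_0$ for every $\ell\le p\le n$.
   Context: $R$ is the curvature tensor (sign convention: Fubini–Study positive), written $R_{v\bar v E\bar E}=R(v,\bar v,E,\bar E)$. The curvature is BC-$p$ positive at $x_0$ if for every unitary orthonormal set $\{E_1,\dots,E_p\}\subset T'_{x_0}N$ there exists $v\in T'_{x_0}N$ with $\sum_{i=1}^pR(v,\bar v,E_i,\bar E_i)>0$. For a $k$-dimensional complex subspace $\Sigma\subset T'_{x_0}N$ with unitary basis $E_1,\dots,E_k$: $S_k(x_0,\Sigma)=\sum_{i,j=1}^kR(E_i,\bar E_i,E_j,\bar E_j)$, and $S_k(x_0)>0$ means $S_k(x_0,\Sigma)>0$ for all such $\Sigma$; $\mathrm{Ric}_k(x_0,\Sigma)(v,\bar v)=\sum_{i=1}^kR(v,\bar v,E_i,\bar E_i)$ for $v\in\Sigma$, a Hermitian form on $\Sigma$. $\mathrm{Ric}_k(x_0)$ is $\ell$-positive if for every $k$-dimensional $\Sigma\subset T'_{x_0}N$ the sum of the $\ell$ smallest eigenvalues of the Hermitian form $\mathrm{Ric}_k(x_0,\Sigma)$ on $\Sigma$ is positive. *)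

(* Defs.v *)
(* Pointwise (linear-algebraic) setting at x0:
   T'_{x0}N is identified with C^n (row vectors 'rV[C]_n) via a unitary
   frame, so the Kähler metric h at x0 is the standard Hermitian product. *)
From HB Require Import structures.
From mathcomp Require Import all_boot all_order all_algebra.
Set Implicit Arguments. Unset Strict Implicit. Unset Printing Implicit Defensive.
Import Order.TTheory GRing.Theory Num.Theory.
Local Open Scope ring_scope.

Section Curv.
Variables (C : numClosedFieldType) (n : nat).

(* Components R_{i jbar k lbar} of the curvature tensor in the unitary frame. *)
Definition curv_tensor := 'I_n -> 'I_n -> 'I_n -> 'I_n -> C.

Definition curv (R : curv_tensor) (X Y Z W : 'rV[C]_n) : C :=
  \sum_(i < n) \sum_(j < n) \sum_(k < n) \sum_(l < n)
    R i j k l * X 0 i * (Y 0 j)^* * Z 0 k * (W 0 l)^*.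

Definition kahler_curvature (R : curv_tensor) : Prop :=
  (forall i j k l, R i j k l = R k j i l) /\
  (forall i j k l, (R i j k l)^* = R j i l k).

Definition unitary_frame p (F : 'M[C]_(p, n)) : Prop :=
  F *m (map_mx (@Num.conj_op C) F)^T = 1%:M.

Definition BC_pos (R : curv_tensor) (p : nat) : Prop :=
  forall F : 'M[C]_(p, n), unitary_frame F ->
    exists v : 'rV[C]_n, 0 < \sum_(i < p) curv R v v (row i F) (row i F).

(* S_k(x0, Sigma) for Sigma spanned by the unitary basis given by the rows of F. *)
Definition S_k (R : curv_tensor) k (F : 'M[C]_(k, n)) : C :=
  \sum_(i < k) \sum_(j < k) curv R (row i F) (row i F) (row j F) (row j F).

Definition S_pos (R : curv_tensor) (k : nat) : Prop :=
  forall F : 'M[C]_(k, n), unitary_frame F -> 0 < S_k R F.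

(* Matrix of the Hermitian form Ric_k(x0, Sigma) in the unitary basis (rows of F):
   entry (a,b) = Ric_k(E_a, Ebar_b). *)
Definition ric_mx (R : curv_tensor) k (F : 'M[C]_(k, n)) : 'M[C]_k :=
  \matrix_(a < k, b < k) \sum_(i < k) curv R (row a F) (row b F) (row i F) (row i F).

End Curv.

Definition eigvals (C : numClosedFieldType) k (M : 'M[C]_k) : seq C :=
  sval (closed_field_poly_normal (char_poly M)).

(* Sum of the l smallest eigenvalues (eigenvalues sorted by real part; for a
   Hermitian matrix they are all real). *)
Definition sum_smallest_eigs (C : numClosedFieldType) k (M : 'M[C]_k) (l : nat) : C :=
  let s := sort (fun x y : C => 'Re x <= 'Re y) (eigvals M) in
  \sum_(i < l) s`_i.

Definition ric_lpos (C : numClosedFieldType) n (R : curv_tensor C n) (k l : nat) : Prop :=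
  forall F : 'M[C]_(k, n), unitary_frame F -> 0 < sum_smallest_eigs (ric_mx R F) l.

(* Main.v *)
Require Import Defs.
From HB Require Import structures.
From mathcomp Require Import all_boot all_order all_algebra.
Set Warnings "-notation-overridden -ambiguous-paths -deprecated".
From mathcomp Require Import sesquilinear spectral perm.
From mathcomp Require Import cyclic separable cyclotomic.
From mathcomp Require Import ring zify.
Set Implicit Arguments. Unset Strict Implicit. Unset Printing Implicit Defensive.
Import Order.TTheory GRing.Theory Num.Theory.
Local Open Scope ring_scope.

Section Basic.
Variable C : numClosedFieldType.

Lemma sum4 n (F : 'I_n -> 'I_n -> 'I_n -> 'I_n -> C) :
  \sum_i \sum_j \sum_k \sum_l F i j k l =
  \sum_(q : 'I_n * ('I_n * ('I_n * 'I_n))) F q.1 q.2.1 q.2.2.1 q.2.2.2.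
Proof.
transitivity (\sum_i \sum_j \sum_(p : 'I_n * 'I_n) F i j p.1 p.2).
  by apply: eq_bigr => i _; apply: eq_bigr => j _; rewrite pair_big.
transitivity (\sum_i \sum_(p : 'I_n * ('I_n * 'I_n)) F i p.1 p.2.1 p.2.2).
  by apply: eq_bigr => i _; rewrite (pair_big xpredT xpredT (fun j p => F i j p.1 p.2)).
by rewrite (pair_big xpredT xpredT (fun i p => F i p.1 p.2.1 p.2.2)).
Qed.

Definition curvq n (R : curv_tensor C n) (X Y Z W : 'rV[C]_n) (q : 'I_n * ('I_n * ('I_n * 'I_n))) :=
  R q.1 q.2.1 q.2.2.1 q.2.2.2 * X 0 q.1 * (Y 0 q.2.1)^* * Z 0 q.2.2.1 * (W 0 q.2.2.2)^*.

Lemma curvE n (R : curv_tensor C n) X Y Z W :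
  curv R X Y Z W = \sum_q curvq R X Y Z W q.
Proof. by rewrite /curv sum4. Qed.

Definition swq n (q : 'I_n * ('I_n * ('I_n * 'I_n))) := (q.2.2.1, (q.2.1, (q.1, q.2.2.2))).
Definition cjq n (q : 'I_n * ('I_n * ('I_n * 'I_n))) := (q.2.1, (q.1, (q.2.2.2, q.2.2.1))).
Lemma swq_inj n : injective (@swq n).
Proof. by move=> [a [b [c d]]] [a' [b' [c' d']]] [-> -> -> ->]. Qed.
Lemma cjq_inj n : injective (@cjq n).
Proof. by move=> [a [b [c d]]] [a' [b' [c' d']]] [-> -> -> ->]. Qed.

Variables (n : nat) (R : curv_tensor C n) (hR : kahler_curvature R).

Lemma curv_swXZ X Y Z W : curv R X Y Z W = curv R Z Y X W.
Proof.
rewrite !curvE (reindex_inj (@swq_inj n)); apply: eq_bigr => -[a [b [c d]]] _.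
rewrite /curvq /= (proj1 hR); ring.
Qed.

Lemma curv_conj X Y Z W : (curv R X Y Z W)^* = curv R Y X W Z.
Proof.
rewrite !curvE rmorph_sum (reindex_inj (@cjq_inj n)); apply: eq_bigr => -[a [b [c d]]] _.
rewrite /curvq /= !rmorphM /= (proj2 hR) !conjCK; ring.
Qed.

Lemma curv_swYW X Y Z W : curv R X Y Z W = curv R X W Z Y.
Proof. by rewrite -[LHS]conjCK curv_conj curv_swXZ curv_conj. Qed.

Lemma curv_real X Z : curv R X X Z Z \is Num.real.
Proof. by apply/CrealP; rewrite curv_conj. Qed.


Lemma curv_linX m (G : 'M[C]_(m, n)) x Y Z W :
  curv R (x *m G) Y Z W = \sum_a x 0 a * curv R (row a G) Y Z W.
Proof.
under [RHS]eq_bigr do rewrite curvE big_distrr.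
rewrite curvE exchange_big; apply: eq_bigr => q _ /=.
rewrite /curvq mxE mulr_sumr !mulr_suml; apply: eq_bigr => a _; rewrite !mxE; ring.
Qed.

Lemma curv_linY m (G : 'M[C]_(m, n)) X y Z W :
  curv R X (y *m G) Z W = \sum_a (y 0 a)^* * curv R X (row a G) Z W.
Proof.
rewrite -[LHS]conjCK (curv_conj X (y *m G) Z W) curv_linX rmorph_sum.
apply: eq_bigr => a _.
by rewrite rmorphM /= (curv_conj (row a G) X W Z).
Qed.

Lemma curv_linZ m (G : 'M[C]_(m, n)) X Y z W :
  curv R X Y (z *m G) W = \sum_a z 0 a * curv R X Y (row a G) W.
Proof.
rewrite (curv_swXZ X Y (z *m G) W) curv_linX; apply: eq_bigr => a _; by rewrite (curv_swXZ (row a G)).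
Qed.

Lemma curv_linW m (G : 'M[C]_(m, n)) X Y Z w :
  curv R X Y Z (w *m G) = \sum_a (w 0 a)^* * curv R X Y Z (row a G).
Proof.
rewrite (curv_swYW X Y Z (w *m G)) curv_linY; apply: eq_bigr => a _; by rewrite (curv_swYW X (row a G)).
Qed.

Definition pull m (G : 'M[C]_(m, n)) : curv_tensor C m :=
  fun a b c d => curv R (row a G) (row b G) (row c G) (row d G).

Lemma curv_mul m (G : 'M[C]_(m, n)) x y z w :
  curv R (x *m G) (y *m G) (z *m G) (w *m G) = curv (pull G) x y z w.
Proof.
rewrite curv_linX; apply: eq_bigr => a _; rewrite curv_linY mulr_sumr.
apply: eq_bigr => b _; rewrite curv_linZ !mulr_sumr.
apply: eq_bigr => c _; rewrite curv_linW !mulr_sumr.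
apply: eq_bigr => d _; rewrite /pull; ring.
Qed.

Lemma pull_kahler m (G : 'M[C]_(m, n)) : kahler_curvature (pull G).
Proof.
split=> a b c d; rewrite /pull; first exact: curv_swXZ.
exact: curv_conj.
Qed.

Lemma S_k_mul m k (X : 'M[C]_(k, m)) (G : 'M[C]_(m, n)) :
  S_k R (X *m G) = S_k (pull G) X.
Proof.
by apply: eq_bigr => i _; apply: eq_bigr => j _; rewrite !row_mul curv_mul.
Qed.

End Basic.

Lemma frame_mul (C : numClosedFieldType) k m n (X : 'M[C]_(k, m)) (G : 'M[C]_(m, n)) :
  unitary_frame X -> unitary_frame G -> unitary_frame (X *m G).
Proof.
rewrite /unitary_frame => hX hG.
by rewrite map_mxM trmx_mul mulmxA -(mulmxA X) hG mulmx1 hX.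
Qed.

Lemma no_frame (C : numClosedFieldType) p n (F : 'M[C]_(p, n)) :
  (n < p)%N -> ~ unitary_frame F.
Proof.
move=> hnp hF; have := mxrankM_maxl F (map_mx Num.conj_op F)^T.
rewrite hF mxrank1 => /leq_trans /(_ (rank_leq_col F)).
by rewrite leqNgt hnp.
Qed.

Lemma drop_sum (C : numClosedFieldType) k (M : 'I_k.+1 -> 'I_k.+1 -> C) :
  \sum_(a0 < k.+1) \sum_(i < k) \sum_(j < k) M (lift a0 i) (lift a0 j)
    + 2%:R * (\sum_a \sum_b M a b) = k.+1%:R * (\sum_a \sum_b M a b) + \sum_a M a a.
Proof.
set All := \sum_a \sum_b M a b.
have E (a0 : 'I_k.+1) : \sum_(i < k) \sum_(j < k) M (lift a0 i) (lift a0 j) =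
    All - \sum_b M a0 b - \sum_a M a a0 + M a0 a0.
  rewrite /All (bigD1_ord a0) //= (bigD1_ord a0 (F := fun a => M a a0)) //=.
  have -> : \sum_(i < k) \sum_(b < k.+1) M (lift a0 i) b =
      \sum_(i < k) M (lift a0 i) a0 + \sum_(i < k) \sum_(j < k) M (lift a0 i) (lift a0 j).
    rewrite -big_split /=; apply: eq_bigr => i _; by rewrite (bigD1_ord a0).
  ring.
under eq_bigr do rewrite E.
rewrite big_split /= !sumrB sumr_const card_ord -/All.
rewrite (exchange_big _ _ _ _ _ (fun i a => M a i)) /= -/All -mulr_natl; ring.
Qed.

Section Roots.
Variable C : numClosedFieldType.

Lemma prim_exists N : (N > 0)%N -> {z : C | N.-primitive_root z}.
Proof.
pose p : {poly C} := 'X^N - 1; have [r Dp] := closed_field_poly_normal p.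
move=> n_gt0; apply/sigW; rewrite (monicP _) ?monicXnsubC // scale1r in Dp.
have rn1: all N.-unity_root r by apply/allP=> z; rewrite -root_prod_XsubC -Dp.
have sz_r: (N < (size r).+1)%N.
  by rewrite -(size_prod_XsubC r id) -Dp size_XnsubC.
have [|z] := hasP (has_prim_root n_gt0 rn1 _ sz_r); last by exists z.
by rewrite -separable_prod_XsubC -Dp separable_Xn_sub_1 // pnatr_eq0 -lt0n.
Qed.

Lemma geom_sum (u : C) m : u ^+ m = 1 ->
  \sum_(i < m) u ^+ i = if u == 1 then m%:R else 0.
Proof.
move=> hu; case: eqP => [->|ne].
  by rewrite (eq_bigr (fun _ => 1)) ?sumr_const ?card_ord // => i _; rewrite expr1n.
have := subrX1 u m; rewrite hu subrr => /esym /eqP; rewrite mulf_eq0 subr_eq0.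
by move/eqP/negbTE: ne => -> /eqP.
Qed.

Lemma prim_conj N (z : C) : N.-primitive_root z -> z * z^* = 1.
Proof.
move=> pz; have N0 := prim_order_gt0 pz.
have : `|z| ^+ N == 1 by rewrite -normrX prim_expr_order // normr1.
rewrite pexpr_eq1 // => /eqP h1.
by rewrite -normCK h1 expr1n.
Qed.

Lemma prim_conjX N (z : C) i : N.-primitive_root z -> z ^+ i * (z ^+ i)^* = 1.
Proof. by move=> pz; rewrite rmorphXn /= -exprMn (prim_conj pz) expr1n. Qed.

Lemma prim_eq N (z : C) i j : N.-primitive_root z -> (i < N)%N -> (j < N)%N ->
  (z ^+ i * (z ^+ j)^* == 1) = (i == j).
Proof.
move=> pz hi hj.
have -> : (z ^+ i * (z ^+ j)^* == 1) = (z ^+ i == z ^+ j).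
  apply/eqP/eqP => [h|->]; last exact: prim_conjX pz.
  by rewrite -[z ^+ i]mulr1 -(prim_conjX j pz) mulrCA h mulr1.
by rewrite (eq_prim_root_expr pz) !modn_small.
Qed.

Lemma unitX N (z : C) i : N.-primitive_root z -> (z ^+ i * (z ^+ i)^*) = 1.
Proof. exact: prim_conjX. Qed.

End Roots.

Lemma sid_aux1 (K x y x' y' : nat) : (x < K -> x' < K -> x + K * y = x' + K * y' -> x = x')%N.
Proof.
move=> hx hx' h; have := congr1 (fun z => z %% K)%N h.
by rewrite /= ![(_ + K * _)%N]addnC !(mulnC K) !modnMDl !modn_small.
Qed.
Lemma sid_aux2 (a b c d : nat) : (a + c = b + d -> a*a + c*c = b*b + d*d -> b != a -> b = c)%N.
Proof.
move=> h1 h2 /eqP h3.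
by have [hbc|hbc|->] := ltngtP b c; [nia|nia|].
Qed.

Definition sidf (m x : nat) : nat := (x + (2 * m) * (x * x))%N.

Lemma sidon m a b c d : (a < m -> b < m -> c < m -> d < m ->
  (sidf m a + sidf m c == sidf m b + sidf m d) =
  ((b == a) && (d == c)) || ((b == c) && (d == a)))%N.
Proof.
rewrite /sidf => ha hb hc hd; apply/eqP/idP => [h|].
  have e1 : (a + c = b + d)%N.
    apply: (@sid_aux1 (2 * m) _ (a * a + c * c) _ (b * b + d * d)); try lia.
  have e2 : (a * a + c * c = b * b + d * d)%N by nia.
  case: (eqVneq b a) => [eba|nba] /=.
    by apply/orP; left; apply/eqP; lia.
  have ebc := sid_aux2 e1 e2 nba; rewrite ebc eqxx /=; apply/eqP; lia.
by case/orP=> /andP[/eqP-> /eqP->]; lia.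
Qed.

Lemma sidf_lt m a c : (a < m -> c < m -> sidf m a + sidf m c < 2 * (m + 2 * m * (m * m)) + 1)%N.
Proof.
rewrite /sidf => ha hc.
have h1 : (a * a <= m * m)%N by apply: leq_mul; lia.
have h2 : (c * c <= m * m)%N by apply: leq_mul; lia.
have h3 : (2 * m * (a * a) <= 2 * m * (m * m))%N by apply: leq_mul.
have h4 : (2 * m * (c * c) <= 2 * m * (m * m))%N by apply: leq_mul.
lia.
Qed.

Section More.
Variable C : numClosedFieldType.

Lemma sum_delta m (F : 'I_m -> C) a : \sum_b (a == b)%:R * F b = F a.
Proof.
rewrite (bigD1 a) //= eqxx mul1r big1 ?addr0 // => b hb.
by rewrite eq_sym (negbTE hb) mul0r.
Qed.

Lemma sum_delta' m (F : 'I_m -> C) a : \sum_b (b == a)%:R * F b = F a.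
Proof. by under eq_bigr do rewrite eq_sym; exact: sum_delta. Qed.

Variables (n : nat) (R : curv_tensor C n) (hR : kahler_curvature R).

Lemma curv_delta a b c d :
  curv R (delta_mx 0 a) (delta_mx 0 b) (delta_mx 0 c) (delta_mx 0 d) = R a b c d.
Proof.
rewrite /curv; transitivity (\sum_i ((a == i)%:R * \sum_j ((b == j)%:R *
  \sum_k ((c == k)%:R * \sum_l ((d == l)%:R * R i j k l))))); last first.
  by rewrite sum_delta sum_delta sum_delta sum_delta.
apply: eq_bigr => i _; rewrite mulr_sumr; apply: eq_bigr => j _; rewrite !mulr_sumr.
apply: eq_bigr => k _; rewrite !mulr_sumr; apply: eq_bigr => l _.
rewrite !mxE /= !conjC_nat (eq_sym i) (eq_sym j) (eq_sym k) (eq_sym l); ring.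
Qed.

Lemma curv_scale s X Y Z W :
  curv R (s *: X) (s *: Y) (s *: Z) (s *: W) = (s * s^*) ^+ 2 * curv R X Y Z W.
Proof.
rewrite !curvE mulr_sumr; apply: eq_bigr => q _.
rewrite /curvq !mxE !rmorphM /=; ring.
Qed.

Lemma TI p (W : 'M[C]_(p, n)) c Z Z' :
  (forall a b, \sum_j W j a * (W j b)^* = (a == b)%:R * c) ->
  \sum_j curv R (row j W) (row j W) Z Z' =
  c * \sum_a curv R (delta_mx 0 a) (delta_mx 0 a) Z Z'.
Proof.
move=> hW.
have E j : curv R (row j W) (row j W) Z Z' = \sum_a \sum_b
    W j a * (W j b)^* * curv R (delta_mx 0 a) (delta_mx 0 b) Z Z'.
  rewrite -[row j W]mulmx1 curv_linX; apply: eq_bigr => a _.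
  rewrite (curv_linY hR) mulr_sumr; apply: eq_bigr => b _.
  by rewrite !row1 !mxE; ring.
under eq_bigr do rewrite E.
rewrite exchange_big mulr_sumr; apply: eq_bigr => a _ /=.
rewrite exchange_big /=.
under eq_bigr do rewrite -big_distrl /= hW.
rewrite -(sum_delta (fun b => curv R (delta_mx 0 a) (delta_mx 0 b) Z Z') a) mulr_sumr.
by apply: eq_bigr => b _; ring.
Qed.

End More.

Lemma frame_entry (C : numClosedFieldType) p q (X : 'M[C]_(p, q)) i i' :
  (X *m (map_mx Num.conj_op X)^T) i i' = \sum_a X i a * (X i' a)^*.
Proof. by rewrite mxE; apply: eq_bigr => a _; rewrite !mxE. Qed.

Lemma frameP (C : numClosedFieldType) p q (X : 'M[C]_(p, q)) :
  (forall i i', \sum_a X i a * (X i' a)^* = (i == i')%:R) -> unitary_frame X.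
Proof.
move=> h; apply/matrixP => i i'; rewrite frame_entry h !mxE.
by case: eqP.
Qed.

Section Core.
Variables (C : numClosedFieldType) (k : nat) (Q : curv_tensor C k.+1).
Hypothesis hQ : kahler_curvature Q.
Hypothesis hk : (0 < k)%N.
Hypothesis hpos : forall X : 'M[C]_(k, k.+1), unitary_frame X -> 0 < S_k Q X.

Lemma pos_scaled (X : 'M[C]_(k, k.+1)) c : 0 < c ->
  (forall i i', \sum_a X i a * (X i' a)^* = (i == i')%:R * c) -> 0 < S_k Q X.
Proof.
move=> hc hX; set s := sqrtC c.
have hs : 0 < s by rewrite sqrtC_gt0.
have sr : s^* = s by apply: conj_Creal; apply: gtr0_real.
have s2 : s * s = c by rewrite -expr2 sqrtCK.
have s0 : s != 0 by rewrite gt_eqF.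
pose Y := s^-1 *: X.
have hY : unitary_frame Y.
  apply: frameP => i i'.
  transitivity ((s^-1 * s^-1) * \sum_a X i a * (X i' a)^*).
    rewrite mulr_sumr; apply: eq_bigr => a _; rewrite !mxE rmorphM rmorphV ?unitfE //= sr.
    ring.
  rewrite hX -s2; field; done.
have -> : X = s *: Y by rewrite /Y scalerA divff ?scale1r.
have -> : S_k Q (s *: Y) = (s * s^*) ^+ 2 * S_k Q Y.
  rewrite /S_k mulr_sumr; apply: eq_bigr => i _; rewrite mulr_sumr; apply: eq_bigr => j _.
  have rZ l : row l (s *: Y) = s *: row l Y by apply/rowP => a; rewrite !mxE.
  by rewrite !rZ curv_scale.
rewrite pmulr_rgt0 ?hpos // sr exprn_gt0 // mulr_gt0 //.
Qed.

Definition Ef (a0 : 'I_k.+1) : 'M[C]_(k, k.+1) := \matrix_(i, a) (lift a0 i == a)%:R.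

Lemma Ef_pos (a0 : 'I_k.+1) : 0 < \sum_(i < k) \sum_(j < k)
  Q (lift a0 i) (lift a0 i) (lift a0 j) (lift a0 j).
Proof.
have hr i : row i (Ef a0) = delta_mx 0 (lift a0 i).
  by apply/rowP => a; rewrite !mxE eqxx /= eq_sym.
suff -> : \sum_(i < k) \sum_(j < k) Q (lift a0 i) (lift a0 i) (lift a0 j) (lift a0 j)
    = S_k Q (Ef a0).
  2: by apply: eq_bigr => i _; apply: eq_bigr => j _; rewrite !hr curv_delta.
apply: hpos; apply: frameP => i i'.
under eq_bigr do rewrite !mxE conjC_nat.
rewrite sum_delta (inj_eq (@lift_inj _ a0)).
by rewrite eq_sym.
Qed.


Section Fourier.
Variables (w z : C) (N : nat).
Hypothesis pw : k.+1.-primitive_root w.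
Hypothesis pz : N.-primitive_root z.
Hypothesis hN : N = (2 * (k.+1 + 2 * k.+1 * (k.+1 * k.+1)) + 1)%N.

Local Notation m := k.+1.
Local Notation f := (sidf k.+1).

Lemma unitXt (u : C) t : u * u^* = 1 -> u ^+ t * (u ^+ t)^* = 1.
Proof. by move=> h; rewrite rmorphXn /= -exprMn h expr1n. Qed.

Lemma orth_pow (j j' : 'I_m) :
  \sum_(a < m) (w ^+ j) ^+ a * ((w ^+ j') ^+ a)^* = (j == j')%:R * m%:R.
Proof.
under eq_bigr do rewrite rmorphXn /= -exprMn.
rewrite geom_sum; first by rewrite (prim_eq pw (ltn_ord j) (ltn_ord j')) val_eqE; case: (j == j') => /=; rewrite ?mul1r ?mul0r.
rewrite exprMn -rmorphXn /= -!exprM !(mulnC _ m) !exprM (prim_expr_order pw).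
by rewrite !expr1n rmorph1 mulr1.
Qed.

Definition Wm (t : nat) : 'M[C]_k.+1 :=
  \matrix_(j < k.+1, a < k.+1) ((w ^+ a) ^+ j * (z ^+ sidf k.+1 a) ^+ t).

Lemma Wrow t (j j' : 'I_m) : \sum_a Wm t j a * (Wm t j' a)^* = (j == j')%:R * m%:R.
Proof.
rewrite -orth_pow; apply: eq_bigr => a _; rewrite !mxE rmorphM /=.
have hu := unitXt t (prim_conjX (f a) pz).
rewrite !(exprAC _ a); set U := (z ^+ f a) ^+ t.
transitivity ((w ^+ j) ^+ a * ((w ^+ j') ^+ a)^* * (U * U^*)); first by ring.
by rewrite hu mulr1.
Qed.

Lemma Wcol t (a b : 'I_m) : \sum_j Wm t j a * (Wm t j b)^* = (a == b)%:R * m%:R.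
Proof.
set Ua := (z ^+ f a) ^+ t; set Ub := (z ^+ f b) ^+ t.
transitivity ((\sum_(j < m) (w ^+ a) ^+ j * ((w ^+ b) ^+ j)^*) * (Ua * Ub^*)).
  rewrite big_distrl /=; apply: eq_bigr => j _; rewrite !mxE rmorphM /=.
  rewrite -/Ua -/Ub; ring.
rewrite orth_pow; case: (eqVneq a b) => [eab|hab].
  by rewrite /Ub -eab -/Ua (unitXt t (prim_conjX (f a) pz)) mulr1.
by rewrite !mul0r.
Qed.


Definition Fr t (j0 : 'I_m) : 'M[C]_(k, m) := \matrix_(i < k, a < m) Wm t (lift j0 i) a.
Definition Mt t (j j' : 'I_m) :=
  curv Q (row j (Wm t)) (row j (Wm t)) (row j' (Wm t)) (row j' (Wm t)).

Lemma Fr_pos t (j0 : 'I_m) : 0 < \sum_(i < k) \sum_(i' < k) Mt t (lift j0 i) (lift j0 i').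
Proof.
have hr i : row i (Fr t j0) = row (lift j0 i) (Wm t) by apply/rowP => a; rewrite !mxE.
suff -> : \sum_(i < k) \sum_(i' < k) Mt t (lift j0 i) (lift j0 i') = S_k Q (Fr t j0).
  apply: (@pos_scaled _ m%:R); first exact: ltr0Sn.
  move=> i i'; transitivity ((lift j0 i == lift j0 i')%:R * (m%:R : C)).
    by rewrite -(Wrow t); apply: eq_bigr => a _; rewrite !mxE.
  by rewrite (inj_eq (@lift_inj _ j0)).
by apply: eq_bigr => i _; apply: eq_bigr => i' _; rewrite /Mt !hr.
Qed.

Lemma Mt_all t : \sum_j \sum_j' Mt t j j' = m%:R ^+ 2 * \sum_a \sum_b Q a a b b.
Proof.
have E1 j : \sum_j' Mt t j j' =
    m%:R * \sum_b curv Q (delta_mx 0 b) (delta_mx 0 b) (row j (Wm t)) (row j (Wm t)).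
  rewrite /Mt; under eq_bigr do rewrite (curv_swXZ hQ) (curv_swYW hQ).
  exact: (TI hQ _ _ (Wcol t)).
under eq_bigr do rewrite E1.
rewrite -mulr_sumr exchange_big /=.
have E2 b : \sum_j curv Q (delta_mx 0 b) (delta_mx 0 b) (row j (Wm t)) (row j (Wm t)) =
    m%:R * \sum_a Q a a b b.
  under eq_bigr do rewrite (curv_swXZ hQ) (curv_swYW hQ).
  rewrite (TI hQ _ _ (Wcol t)); congr (_ * _); apply: eq_bigr => a _.
  by rewrite curv_delta.
under eq_bigr do rewrite E2.
rewrite -mulr_sumr mulrA -expr2 exchange_big /=; done.
Qed.

Definition u1 (a b c d : nat) := w ^+ a * (w ^+ b)^* * w ^+ c * (w ^+ d)^*.
Definition u2 (a b c d : nat) := z ^+ f a * (z ^+ f b)^* * z ^+ f c * (z ^+ f d)^*.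
Definition sidb (a b c d : nat) := ((b == a) && (d == c)) || ((b == c) && (d == a)).

Lemma u2_sum (a b c d : 'I_m) : \sum_(t < N) (u2 a b c d) ^+ t = (sidb a b c d)%:R * N%:R.
Proof.
have E : u2 a b c d = z ^+ (f a + f c) * (z ^+ (f b + f d))^*.
  by rewrite /u2 !exprD rmorphM /=; ring.
rewrite E geom_sum.
  rewrite (prim_eq pz) ?hN ?sidf_lt // sidon // /sidb.
  by case: (_ || _) => /=; rewrite ?mul1r ?mul0r.
rewrite exprMn -rmorphXn /= -!exprM !(mulnC _ N) !exprM (prim_expr_order pz).
by rewrite !expr1n rmorph1 mulr1.
Qed.

Lemma u1_sid (a b c d : nat) : sidb a b c d -> u1 a b c d = 1.
Proof.
rewrite /sidb /u1; have h1 := prim_conjX a pw; have h2 := prim_conjX c pw.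
case/orP => /andP[/eqP -> /eqP ->].
  by transitivity ((w ^+ a * (w ^+ a)^*) * (w ^+ c * (w ^+ c)^*)); [ring | rewrite h1 h2 mulr1].
by transitivity ((w ^+ a * (w ^+ a)^*) * (w ^+ c * (w ^+ c)^*)); [ring | rewrite h1 h2 mulr1].
Qed.

Lemma diag_sum : \sum_(t < N) \sum_j Mt t j j =
  (N * m)%:R * \sum_(q : 'I_m * ('I_m * ('I_m * 'I_m)))
     (sidb q.1 q.2.1 q.2.2.1 q.2.2.2)%:R * Q q.1 q.2.1 q.2.2.1 q.2.2.2.
Proof.
have E t j : Mt t j j = \sum_(q : 'I_m * ('I_m * ('I_m * 'I_m)))
    Q q.1 q.2.1 q.2.2.1 q.2.2.2 *
      ((u1 q.1 q.2.1 q.2.2.1 q.2.2.2) ^+ j * (u2 q.1 q.2.1 q.2.2.1 q.2.2.2) ^+ t).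
  rewrite /Mt curvE; apply: eq_bigr => q _; rewrite /curvq !mxE /u1 /u2.
  rewrite !exprMn !rmorphM !rmorphXn /=; ring.
under eq_bigr do under eq_bigr do rewrite E.
under eq_bigr do rewrite exchange_big /=.
rewrite exchange_big mulr_sumr; apply: eq_bigr => q _ /=.
set x1 := u1 _ _ _ _; set x2 := u2 _ _ _ _; set Qq := Q _ _ _ _.
transitivity (Qq * (\sum_(t < N) x2 ^+ t) * (\sum_(j < m) x1 ^+ j)).
  rewrite -mulrA big_distrl /= mulr_sumr; apply: eq_bigr => t _.
  rewrite !mulr_sumr; apply: eq_bigr => j _; ring.
rewrite /x2 u2_sum; case hs: sidb => /=.
  rewrite /x1 u1_sid // (eq_bigr (fun _ => 1)); last by move=> j _; rewrite expr1n.
  by rewrite sumr_const card_ord natrM; ring.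
by rewrite !mul0r mulr0 mul0r mulr0.
Qed.

Lemma sidb_split (a b c d : 'I_m) : (sidb a b c d)%:R =
  (b == a)%:R * (d == c)%:R + (b == c)%:R * (d == a)%:R
   - (a == c)%:R * ((b == a)%:R * (d == a)%:R) :> C.
Proof.
rewrite /sidb !val_eqE.
case: (eqVneq a c) => [<-|hac].
  by rewrite orbb; case: (b == a); case: (d == a) => /=; ring.
case: (eqVneq b a) => [->|hba].
  by rewrite ?(negbTE hac) /=; case: (d == c); case: (d == a) => /=; ring.
by rewrite ?(negbTE hba) ?(negbTE hac) /=; case: (b == c); case: (d == a) => /=; ring.
Qed.

Lemma sid_sum : \sum_(q : 'I_m * ('I_m * ('I_m * 'I_m)))
     (sidb q.1 q.2.1 q.2.2.1 q.2.2.2)%:R * Q q.1 q.2.1 q.2.2.1 q.2.2.2 =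
  2%:R * (\sum_a \sum_b Q a a b b) - \sum_a Q a a a a.
Proof.
under eq_bigr do rewrite sidb_split.
rewrite -(sum4 (fun a b c d => ((b == a)%:R * (d == c)%:R + (b == c)%:R * (d == a)%:R
   - (a == c)%:R * ((b == a)%:R * (d == a)%:R)) * Q a b c d)).
have E a : \sum_b \sum_c \sum_d ((b == a)%:R * (d == c)%:R + (b == c)%:R * (d == a)%:R
   - (a == c)%:R * ((b == a)%:R * (d == a)%:R)) * Q a b c d =
   \sum_c Q a a c c + \sum_b Q a b b a - Q a a a a.
  have E1 b c : \sum_d ((b == a)%:R * (d == c)%:R + (b == c)%:R * (d == a)%:R
     - (a == c)%:R * ((b == a)%:R * (d == a)%:R)) * Q a b c d =
     (b == a)%:R * Q a b c c + (b == c)%:R * Q a b c a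
       - (a == c)%:R * ((b == a)%:R * Q a b c a).
    transitivity (\sum_d ((d == c)%:R * ((b == a)%:R * Q a b c d)
       + (d == a)%:R * ((b == c)%:R * Q a b c d)
       - (d == a)%:R * ((a == c)%:R * ((b == a)%:R * Q a b c d)))).
      by apply: eq_bigr => d _; ring.
    rewrite sumrB big_split /=.
    by rewrite (sum_delta' (fun d => (b == a)%:R * Q a b c d))
      (sum_delta' (fun d => (b == c)%:R * Q a b c d))
      (sum_delta' (fun d => (a == c)%:R * ((b == a)%:R * Q a b c d))).
  under eq_bigr do under eq_bigr do rewrite E1.
  have E2 b : \sum_c ((b == a)%:R * Q a b c c + (b == c)%:R * Q a b c a
       - (a == c)%:R * ((b == a)%:R * Q a b c a)) =
     (b == a)%:R * \sum_c Q a b c c + Q a b b a - (b == a)%:R * Q a b a a.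
    rewrite sumrB big_split /= mulr_sumr.
    rewrite (sum_delta (fun c => Q a b c a) b).
    by rewrite (sum_delta (fun c => (b == a)%:R * Q a b c a) a).
  under eq_bigr do rewrite E2.
  rewrite sumrB big_split /=.
  rewrite (sum_delta' (fun b => \sum_c Q a b c c) a).
  by rewrite (sum_delta' (fun b => Q a b a a) a).
under eq_bigr do rewrite E.
rewrite sumrB big_split /=.
have -> : \sum_(i < m) \sum_(b < m) Q i b b i = \sum_a \sum_b Q a a b b.
  rewrite exchange_big; apply: eq_bigr => a _; apply: eq_bigr => b _.
  by rewrite (proj1 hQ).
ring.
Qed.

Lemma sum_pos n (F : 'I_n.+1 -> C) : (forall i, 0 < F i) -> 0 < \sum_i F i.
Proof.
move=> h; rewrite (bigD1 ord0) //= ltr_wpDr ?h //.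
by apply: sumr_ge0 => i _; apply: ltW.
Qed.

Lemma sum_pos' n (F : 'I_n -> C) : (0 < n)%N -> (forall i, 0 < F i) -> 0 < \sum_i F i.
Proof. by case: n F => // n F _; exact: sum_pos. Qed.

Lemma core_pos : 0 < \sum_a \sum_b Q a a b b.
Proof.
set S := \sum_a \sum_b Q a a b b; set D := \sum_a Q a a a a.
set A := \sum_(a0 < m) \sum_(i < k) \sum_(j < k) Q (lift a0 i) (lift a0 i) (lift a0 j) (lift a0 j).
have hA : 0 < A by apply: sum_pos => a0; exact: Ef_pos.
have eA : A + 2%:R * S = m%:R * S + D.
  exact: (drop_sum (fun a b => Q a a b b)).
set B := \sum_(t < N) \sum_(j0 < m) \sum_(i < k) \sum_(i' < k) Mt t (lift j0 i) (lift j0 i').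
have N0 : (0 < N)%N by rewrite hN addn1.
have hB : 0 < B.
  by apply: sum_pos' => // t; apply: sum_pos => j0; exact: Fr_pos.
have eB t : \sum_(j0 < m) \sum_(i < k) \sum_(i' < k) Mt t (lift j0 i) (lift j0 i') =
    m%:R * (m%:R ^+ 2 * S) + \sum_j Mt t j j - 2%:R * (m%:R ^+ 2 * S).
  have h := drop_sum (Mt t).
  rewrite -(Mt_all t).
  move: h; set X := (X in X + _ = _); set All := \sum_a \sum_b Mt t a b.
  set Dg := \sum_a Mt t a a => h.
  by rewrite -h addrK.
have eB' : B = N%:R * (m%:R * (m%:R ^+ 2 * S) - 2%:R * (m%:R ^+ 2 * S))
    + (N * m)%:R * (2%:R * S - D).
  rewrite /B; under eq_bigr do rewrite eB.
  rewrite sumrB big_split /= diag_sum sid_sum !sumr_const card_ord -/S -/D.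
  ring.
have key : N%:R * m%:R * A + B = (N * m * m * k)%:R * S.
  have -> : A = m%:R * S + D - 2%:R * S by rewrite -eA; ring.
  rewrite eB' !natrM; ring.
have : 0 < (N * m * m * k)%:R * S.
  by rewrite -key addr_gt0 // mulr_gt0 // mulr_gt0 // ltr0n.
by rewrite pmulr_rgt0 // ltr0n !muln_gt0 N0 hk.
Qed.
End Fourier.
End Core.

Section Spec.
Variable C : numClosedFieldType.
Local Open Scope sesquilinear_scope.

Lemma char_poly_conj k (P D : 'M[C]_k) : P \in unitmx ->
  char_poly (invmx P *m D *m P) = char_poly D.
Proof.
move=> hP; rewrite /char_poly /char_poly_mx.
have -> : 'X%:M - map_mx polyC (invmx P *m D *m P) =
   map_mx polyC (invmx P) *m ('X%:M - map_mx polyC D) *m map_mx polyC P.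
  rewrite mulmxBr mulmxBl -!map_mxM; congr (_ - _).
  by rewrite scalar_mxC -mulmxA -map_mxM mulVmx // map_mx1 mulmx1.
rewrite !det_mulmx mulrC mulrA -det_mulmx -map_mxM mulmxV // map_mx1 det1 mul1r //.
Qed.

Lemma eigvals_perm k (M : 'M[C]_k) : M \is hermsymmx ->
  perm_eq (eigvals M) [seq spectral_diag M 0 j | j <- enum 'I_k].
Proof.
move=> hM; have /orthomx_spectralP hM' := hermitian_normalmx hM.
have Pu := spectral_unit M.
move: hM' Pu; set P := spectralmx M; set d := spectral_diag M => hM' Pu.
rewrite /eigvals; case: closed_field_poly_normal => s /= hs.
rewrite (monicP (char_poly_monic M)) scale1r in hs.
apply: prod_XsubC_eq; rewrite -hs hM' char_poly_conj //.
rewrite char_poly_trig ?diag_mx_is_trig // big_map big_enum /=.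
by apply: eq_bigr => i _; rewrite mxE eqxx mulr1n.
Qed.


Lemma knap k (x v : 'I_k -> C) (l p : nat) (l0 : 'I_k) :
  (0 < l)%N -> (l <= p)%N -> (l0 : nat) = l.-1 ->
  (forall i j : 'I_k, (i <= j)%N -> x i <= x j) ->
  (forall i, 0 <= v i) -> (forall i, v i <= 1) -> \sum_i v i = p%:R ->
  p%:R * \sum_(i < k | (i < l)%N) x i <= l%:R * \sum_i v i * x i.
Proof.
move=> l_gt0 hlp hl0 hx hv0 hv1 hvs.
have hlk : (l <= k)%N by have := ltn_ord l0; lia.
set c := x l0.
have hind : \sum_(i < k) ((i < l)%N)%:R = l%:R :> C.
  transitivity (\sum_(i < k | (i < l)%N) (1 : C)).
    by rewrite [RHS]big_mkcond; apply: eq_bigr => i _; case: (i < l)%N.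
  by rewrite -(big_ord_widen k (fun _ => (1 : C)) hlk) sumr_const card_ord.
have hxs : \sum_(i < k | (i < l)%N) x i = \sum_(i < k) ((i < l)%N)%:R * x i.
  by rewrite big_mkcond; apply: eq_bigr => i _; case: (i < l)%N; rewrite ?mul1r ?mul0r.
have key : 0 <= \sum_i (l%:R * v i - p%:R * ((i < l)%N)%:R) * (x i - c).
  apply: sumr_ge0 => i _; case: (ltnP i l) => hil /=.
    apply: mulr_le0.
      rewrite mulr1 subr_le0 (le_trans (y := l%:R)) ?ler_nat //.
      by rewrite -[X in _ <= X]mulr1 ler_wpM2l ?ler0n.
    by rewrite subr_le0 hx //; lia.
  apply: mulr_ge0; first by rewrite mulr0 subr0 mulr_ge0 ?ler0n.
  by rewrite subr_ge0 hx //; lia.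
have E : \sum_i (l%:R * v i - p%:R * ((i < l)%N)%:R) * (x i - c) =
   l%:R * \sum_i v i * x i - p%:R * \sum_(i < k) ((i < l)%N)%:R * x i
   - c * (l%:R * \sum_i v i - p%:R * \sum_(i < k) ((i < l)%N)%:R).
  rewrite !mulr_sumr -!sumrB mulr_sumr -sumrB; apply: eq_bigr => i _; ring.
rewrite E hvs hind in key.
rewrite hxs -subr_ge0.
by move: key; rewrite (mulrC (l%:R) (p%:R)) subrr mulr0 subr0.
Qed.

Lemma trace_bound k (M : 'M[C]_k) p (Y : 'M[C]_(p, k)) l :
  M \is hermsymmx -> unitary_frame Y -> (0 < l)%N -> (l <= p)%N ->
  p%:R * sum_smallest_eigs M l <=
  l%:R * \sum_(a < p) (Y *m M *m (map_mx Num.conj_op Y)^T) a a.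
Proof.
move=> hM hY l_gt0 hlp.
have hpk : (p <= k)%N by case: (leqP p k) => // /no_frame /(_ hY).
have hlk : (l <= k)%N by apply: leq_trans hpk.
have /orthomx_spectralP hM' := hermitian_normalmx hM.
have dR := hermitian_spectral_diag_real hM.
have PU := spectral_unitarymx M.
have hperm0 := eigvals_perm hM.
move: hM' dR PU hperm0; set P := spectralmx M; set d := spectral_diag M => hM' dR PU hperm0.
have dreal j : d 0 j \is Num.real by move/mxOverP: dR; apply.
have PP : P *m P^t* = 1%:M by apply/unitarymxP.
have PP' : P^t* *m P = 1%:M by apply: mulmx1C.
rewrite invmx_unitary // in hM'.
set Z := Y *m P^t*.
have hY' : Y *m Y^t* = 1%:M by rewrite -map_trmx.
have ZZ : Z *m Z^t* = 1%:M.
  rewrite /Z trmx_mul map_mxM trmxCK mulmxA -(mulmxA Y) PP' mulmx1 //.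
set w := fun j => \sum_(a < p) Z a j * (Z a j)^*.
have trace : \sum_(a < p) (Y *m M *m (map_mx Num.conj_op Y)^T) a a = \sum_j d 0 j * w j.
  have -> : Y *m M *m (map_mx Num.conj_op Y)^T = Z *m diag_mx d *m Z^t*.
    rewrite hM' /Z trmx_mul map_mxM trmxCK map_trmx !mulmxA //.
  rewrite /w; under eq_bigr do rewrite mxE.
  under [RHS]eq_bigr do rewrite mulr_sumr.
  rewrite exchange_big; apply: eq_bigr => a _ /=; apply: eq_bigr => j _.
  by rewrite mul_mx_diag !mxE; ring.
have w0 j : 0 <= w j by apply: sumr_ge0 => a _; apply: mul_conjC_ge0.
have wreal j : (w j)^* = w j by apply/CrealP; apply: ger0_real.
have wsum : \sum_j w j = p%:R.
  rewrite /w exchange_big /= -[p in RHS]card_ord -sumr_const; apply: eq_bigr => a _.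
  have := congr1 (fun A : 'M_p => A a a) ZZ; rewrite !mxE eqxx mulr1n => <-.
  by apply: eq_bigr => j _; rewrite !mxE.
set G := Z^t* *m Z.
have GG : G *m G = G by rewrite /G mulmxA -(mulmxA _ Z) ZZ mulmx1.
have Gjj j : G j j = w j.
  by rewrite /G mxE /w; apply: eq_bigr => a _; rewrite !mxE mulrC.
have Gsym j b : G b j = (G j b)^*.
  rewrite /G !mxE rmorph_sum; apply: eq_bigr => a _; rewrite !mxE rmorphM /= conjCK.
  by rewrite mulrC.
have w1 j : w j <= 1.
  have hle : w j * w j <= w j.
    rewrite -{3}Gjj -GG mxE (bigD1 j) //= Gsym Gjj wreal lerDl.
    by apply: sumr_ge0 => b _; rewrite (Gsym j b); apply: mul_conjC_ge0.
  case: (eqVneq (w j) 0) => [->|wn0]; first by rewrite ler01.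
  have wp : 0 < w j by rewrite lt_def wn0 w0.
  by rewrite -(ler_pM2l wp) mulr1.
pose s' := sort (fun x y : C => 'Re x <= 'Re y) (eigvals M).
have hperm : perm_eq s' (map_tuple (fun j => d 0 j) (ord_tuple k)).
  by rewrite /s' perm_sort /=.
have [sg hsg] := perm.tuple_permP hperm.
have hs'i (i : 'I_k) : s'`_i = d 0 (sg i).
  by rewrite hsg nth_mktuple tnth_map tnth_ord_tuple.
have ssz : size s' = k by rewrite hsg size_tuple.
have srt : sorted (fun x y : C => 'Re x <= 'Re y) s'.
  by apply: sort_sorted => x y; apply: real_leVge; apply: Creal_Re.
have hx (i j : 'I_k) : (i <= j)%N -> d 0 (sg i) <= d 0 (sg j).
  move=> hij; rewrite -!hs'i.
  have htr : transitive (fun x y : C => 'Re x <= 'Re y) by move=> y x z; apply: le_trans.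
  have hrf : reflexive (fun x y : C => 'Re x <= 'Re y) by move=> x; apply: lexx.
  have := sorted_leq_nth htr hrf 0 srt.
  rewrite ssz => /(_ i j (ltn_ord i) (ltn_ord j) hij).
  by rewrite !hs'i (Creal_ReP _ (dreal _)) (Creal_ReP _ (dreal _)).
rewrite /sum_smallest_eigs -/s' trace.
rewrite (big_ord_widen k (fun i => s'`_i) hlk).
rewrite (eq_bigr (fun i : 'I_k => d 0 (sg i))); last by move=> i _; rewrite hs'i.
have l1k : (l.-1 < k)%N by lia.
apply: le_trans (knap (x := fun i => d 0 (sg i)) (v := fun i => w (sg i))
   (l0 := Ordinal l1k) l_gt0 hlp erefl hx (fun i => w0 _) (fun i => w1 _) _) _.
  by rewrite -wsum [RHS](reindex_inj (@perm.perm_inj _ sg)).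
rewrite [X in _ <= _ * X](reindex_inj (@perm.perm_inj _ sg)) /=.
by rewrite le_eqVlt; apply/orP; left; apply/eqP; congr (_ * _); apply: eq_bigr => i _; rewrite mulrC.
Qed.
End Spec.

Section Final.
Variables (C : numClosedFieldType) (n : nat) (R : curv_tensor C n).
Hypothesis hR : kahler_curvature R.

Lemma pos_pick p (F : 'M[C]_(p, n)) q (G : 'M[C]_(q, n)) :
  0 < \sum_(i < q) \sum_(j < p) curv R (row i G) (row i G) (row j F) (row j F) ->
  exists v : 'rV[C]_n, 0 < \sum_(j < p) curv R v v (row j F) (row j F).
Proof.
move=> h.
case: (boolP [exists i : 'I_q, 0 < \sum_(j < p) curv R (row i G) (row i G) (row j F) (row j F)]).
  by case/existsP => i hi; exists (row i G).
rewrite negb_exists => /forallP hn.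
have : \sum_(i < q) \sum_(j < p) curv R (row i G) (row i G) (row j F) (row j F) <= 0.
  apply: sumr_le0 => i _.
  have hr : \sum_(j < p) curv R (row i G) (row i G) (row j F) (row j F) \is Num.real.
    by apply: rpred_sum => j _; apply: curv_real.
  by rewrite real_leNgt ?real0 // hn.
by move=> /(lt_le_trans h); rewrite ltxx.
Qed.

Lemma S_to_BC p : S_pos R p -> BC_pos R p.
Proof. by move=> hS F hF; apply: (pos_pick (G := F)); exact: hS. Qed.

Lemma S0_false : ~ S_pos R 0.
Proof.
move=> h; have hf : unitary_frame (0 : 'M[C]_(0, n)).
  by rewrite /unitary_frame [LHS]flatmx0 [RHS]flatmx0.
by have := h 0 hf; rewrite /S_k big_ord0 ltxx.
Qed.

Lemma S_step k : (0 < k)%N -> (k < n)%N -> S_pos R k -> S_pos R k.+1.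
Proof.
move=> hk hkn hS G hG.
have [w pw] := prim_exists C (ltn0Sn k).
have N0 : (0 < 2 * (k.+1 + 2 * k.+1 * (k.+1 * k.+1)) + 1)%N by rewrite addn1.
have [z pz] := prim_exists C N0.
have hQ := pull_kahler hR G.
have hpos : forall X : 'M[C]_(k, k.+1), unitary_frame X -> 0 < S_k (pull R G) X.
  by move=> X hX; rewrite -(S_k_mul hR); apply: hS; apply: frame_mul.
exact: (core_pos hQ hk hpos pw pz erefl).
Qed.

Lemma S_up k p : (0 < k)%N -> (k <= p)%N -> (p <= n)%N -> S_pos R k -> S_pos R p.
Proof.
move=> hk hkp hpn hS; elim: p hkp hpn => [|p IH]; first by move=> h0; exfalso; lia.
rewrite leq_eqVlt => /orP[/eqP<- //|hkp] hpn.
apply: S_step; [lia | exact: hpn | apply: IH; lia].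
Qed.

Lemma part1 k : S_pos R k -> forall p, (k <= p)%N -> BC_pos R p.
Proof.
move=> hS p hkp.
case: (posnP k) => [k0|kpos]; first by move: hS; rewrite k0 => /S0_false.
case: (leqP p n) => [hpn|hnp]; last by move=> F /(no_frame hnp).
by apply: S_to_BC; apply: (S_up kpos hkp hpn hS).
Qed.


Lemma ric_herm k (F : 'M[C]_(k, n)) : ric_mx R F \is hermsymmx.
Proof.
apply/is_hermitianmxP; rewrite expr0 scale1r; apply/matrixP => a b.
rewrite !mxE rmorph_sum; apply: eq_bigr => i _.
by rewrite /= (curv_conj hR).
Qed.

Lemma ric_trace k p (F : 'M[C]_(k, n)) (Y : 'M[C]_(p, k)) :
  \sum_(a < p) (Y *m ric_mx R F *m (map_mx Num.conj_op Y)^T) a a =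
  \sum_(a < p) \sum_(i < k) curv R (row a (Y *m F)) (row a (Y *m F)) (row i F) (row i F).
Proof.
apply: eq_bigr => a _.
transitivity (\sum_(b < k) \sum_(b' < k) Y a b * (Y a b')^* * ric_mx R F b b').
  rewrite mxE exchange_big /=; apply: eq_bigr => b' _.
  rewrite !mxE big_distrl /=; apply: eq_bigr => b _; rewrite !mxE; ring.
have E i : curv R (row a (Y *m F)) (row a (Y *m F)) (row i F) (row i F) =
   \sum_(b < k) \sum_(b' < k) Y a b * (Y a b')^* * curv R (row b F) (row b' F) (row i F) (row i F).
  rewrite row_mul curv_linX; apply: eq_bigr => b _.
  rewrite (curv_linY hR) mulr_sumr; apply: eq_bigr => b' _; rewrite !mxE; ring.
under [RHS]eq_bigr do rewrite E.
rewrite [RHS]exchange_big; apply: eq_bigr => b _ /=.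
rewrite [RHS]exchange_big; apply: eq_bigr => b' _ /=.
by rewrite mxE mulr_sumr.
Qed.

Lemma ric_T k l p (F : 'M[C]_(k, n)) (Y : 'M[C]_(p, k)) :
  ric_lpos R k l -> (0 < l)%N -> (l <= p)%N -> unitary_frame F -> unitary_frame Y ->
  0 < \sum_(a < p) \sum_(i < k) curv R (row a (Y *m F)) (row a (Y *m F)) (row i F) (row i F).
Proof.
move=> hric l0 hlp hF hY.
have hb := trace_bound (ric_herm F) hY l0 hlp.
have hs := hric F hF.
rewrite -ric_trace.
have : 0 < l%:R * \sum_(a < p) (Y *m ric_mx R F *m (map_mx Num.conj_op Y)^T) a a.
  apply: lt_le_trans hb; rewrite mulr_gt0 // ltr0n; lia.
by rewrite pmulr_rgt0 // ltr0n.
Qed.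

Lemma ric_Spos k l : (0 < l)%N -> (l <= k)%N -> ric_lpos R k l -> S_pos R k.
Proof.
move=> l0 hlk hric F hF.
have h1 : unitary_frame (1%:M : 'M[C]_k).
  by rewrite /unitary_frame map_mx1 trmx1 mulmx1.
have := ric_T hric l0 hlk hF h1.
by rewrite mul1mx.
Qed.

Lemma ric_small k l p : (0 < l)%N -> (l <= p)%N -> (p <= k)%N -> (k <= n)%N ->
  ric_lpos R k l -> BC_pos R p.
Proof.
move=> l0 hlp hpk hkn hric E hE.
pose A : 'M[C]_(k, n) := \matrix_(i < k, j < n) \sum_(a < p) ((a : nat) == i)%:R * E a j.
have hEA : (E <= A)%MS.
  apply/row_subP => a.
  have -> : row a E = row (widen_ord hpk a) A.
    apply/rowP => j; rewrite !mxE /=.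
    rewrite -(sum_delta' (fun a' => E a' j) a); apply: eq_bigr => a' _.
    by rewrite val_eqE.
  exact: row_sub.
pose F := schmidt A.
have hF : unitary_frame F.
  have := schmidt_unitarymx A hkn; move/unitarymxP.
  by rewrite /unitary_frame map_trmx.
have [Y hY] := submxP (submx_trans hEA (schmidt_sub A)).
have hYf : unitary_frame Y.
  move: hE; rewrite /unitary_frame hY map_mxM trmx_mul mulmxA -(mulmxA Y) hF mulmx1 //.
have := ric_T hric l0 hlp hF hYf; rewrite -hY.
rewrite exchange_big /= => hpos.
apply: (pos_pick (G := F)); move: hpos.
by under eq_bigr do under eq_bigr do rewrite (curv_swXZ hR) (curv_swYW hR).
Qed.

Lemma ric_l0 k : (k <= n)%N -> ~ ric_lpos R k 0.
Proof.
move=> hk h.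
pose F0 : 'M[C]_(k, n) := \matrix_(i < k, j < n) (widen_ord hk i == j)%:R.
have hF : unitary_frame F0.
  apply: frameP => i i'.
  under eq_bigr do rewrite !mxE conjC_nat.
  rewrite sum_delta.
  have -> : (widen_ord hk i' == widen_ord hk i) = (i == i').
    by apply/eqP/eqP => [/(congr1 val) /= /val_inj|->].
  by [].
by have := h F0 hF; rewrite /sum_smallest_eigs big_ord0 ltxx.
Qed.

Theorem main (k : nat) (hk : (k <= n)%N) :
  (S_pos R k -> forall p : nat, (k <= p)%N -> BC_pos R p) /\
  (forall l : nat, (l <= k)%N -> ric_lpos R k l ->
     forall p : nat, (l <= p)%N -> (p <= n)%N -> BC_pos R p).
Proof.
split; first exact: part1.
move=> l hlk hric p hlp hpn.
case: (posnP l) => [l0|lpos]; first by move: hric; rewrite l0 => /(ric_l0 hk).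
case: (leqP k p) => [hkp|hpk].
  exact: (part1 (ric_Spos lpos hlk hric) hkp).
exact: (ric_small lpos hlp (ltnW hpk) hk hric).
Qed.
End Final.


Theorem proposition4p5 (C : numClosedFieldType) (n : nat) (R : curv_tensor C n)
  (hR : kahler_curvature R) (k : nat) (hk : (k <= n)%N) :
  (S_pos R k -> forall p : nat, (k <= p)%N -> BC_pos R p) /\
  (forall l : nat, (l <= k)%N -> ric_lpos R k l ->
     forall p : nat, (l <= p)%N -> (p <= n)%N -> BC_pos R p).
Proof. exact: (main hR hk). Qed.
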